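(* Let $\mathbf p,\mathbf q,\mathbf r,\mathbf s$ be words, $x,y$ letters, and $\mathbf w=\mathbf pxy\mathbf qx\mathbf ry\mathbf s$. If every letter occurring in $\mathbf r$ occurs at least twice in $\mathbf w$, then $\mathbf D_{15}$ satisfies the identity $\mathbf w\approx\mathbf pyx\mathbf qx\mathbf ry\mathbf s$.
   Context: Words are elements of the free monoid over a countably infinite alphabet; distinct symbols below are distinct letters. $\prod$ denotes concatenation in increasing index order; $\operatorname{var}\Sigma$ is the monoid variety defined by identities $\Sigma$. $S_N$ is the symmetric group on $\{1,\dots,N\}$, $i\tau$ the image of $i$. For $n,m,k\in\mathbb N$, $\tau\in S_{n+m+k}$: $\mathbf c_{n,m,k}[\tau]=\bigl(\prod_{i=1}^n z_it_i\bigr)xyt\bigl(\prod_{i=n+1}^{n+m} z_it_i\bigr)x\bigl(\prod_{i=1}^{n+m+k-1} z_{i\tau}y_i^2\bigr)z_{(n+m+k)\tau}y\bigl(\prod_{i=n+m+1}^{n+m+k} t_iz_i\bigr)$; $\mathbf c'_{n,m,k}[\tau]$ is obtained by swapping the first occurrences of $x$ and $y$; $\mathbf d_{n,m,k}[\tau]$, $\mathbf d'_{n,m,k}[\tau]$ are $\mathbf c_{n,m,k}[\tau]$, $\mathbf c'_{n,m,k}[\tau]$ read right to left. $\Phi_1$ is the set of all identities $\mathbf c_{n,m,k}[\tau]\approx\mathbf c'_{n,m,k}[\tau]$, $\mathbf d_{n,m,k}[\tau]\approx\mathbf d'_{n,m,k}[\tau]$. $\mathbf D_{15}=\operatorname{var}\{\Phi_1,\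 xyx\approx x^2yx,\ xyx\approx xyx^2,\ (xy)^2\approx(yx)^2\}$. *)

(* Defs.v *)
From mathcomp Require Import all_boot all_fingroup.
Unset Printing Implicit Defensive.

Definition word := seq nat.

Record monoid := Monoid {
  mcarrier :> Type;
  mop : mcarrier -> mcarrier -> mcarrier;
  mone : mcarrier;
  mopA : forall a b c, mop a (mop b c) = mop (mop a b) c;
  mop1l : forall a, mop mone a = a;
  mop1r : forall a, mop a mone = a }.

Definition meval (M : monoid) (phi : nat -> M) (w : word) : M :=
  foldr (fun a acc => mop M (phi a) acc) (mone M) w.

Definition msat (M : monoid) (u v : word) : Prop :=
  forall phi : nat -> M, meval M phi u = meval M phi v.

(* Concrete distinct letters: x, y, t, and z_i, t_i, y_i (i >= 1). *)
Definition lx : nat := 0.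
Definition ly : nat := 1.
Definition lt0 : nat := 2.
Definition lz (i : nat) : nat := 3 * i.
Definition lti (i : nat) : nat := 3 * i + 1.
Definition lyi (i : nat) : nat := 3 * i + 2.

(* i tau for i in {1..N}, tau a permutation of 'I_N (i.e. of {0..N-1}). *)
Definition pimg {N : nat} (tau : {perm 'I_N}) (i : nat) : nat :=
  match @insub nat (fun j => j < N) _ i.-1 with
  | Some j => (tau j).+1
  | None => 0
  end.

(* c_{n,m,k}[tau] ; the first occurrences block is [:: x; y] or [:: y; x]. *)
Definition cword (first : word) (n m k : nat) (tau : {perm 'I_(n + m + k)}) : word :=
  let N := n + m + k in
  flatten [seq [:: lz i; lti i] | i <- iota 1 n]
  ++ first ++ [:: lt0]
  ++ flatten [seq [:: lz i; lti i] | i <- iota n.+1 m]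
  ++ [:: lx]
  ++ flatten [seq [:: lz (pimg tau i); lyi i; lyi i] | i <- iota 1 N.-1]
  ++ [:: lz (pimg tau N); ly]
  ++ flatten [seq [:: lti i; lz i] | i <- iota (n + m).+1 k].

Definition c_w n m k tau : word := cword [:: lx; ly] n m k tau.
Definition c'_w n m k tau : word := cword [:: ly; lx] n m k tau.
Definition d_w n m k tau : word := rev (c_w n m k tau).
Definition d'_w n m k tau : word := rev (c'_w n m k tau).

Definition D15_axiom (u v : word) : Prop :=
  (exists (n m k : nat) (tau : {perm 'I_(n + m + k)}),
      0 < n + m + k /\
      ((u = c_w n m k tau /\ v = c'_w n m k tau) \/
       (u = d_w n m k tau /\ v = d'_w n m k tau)))
  \/ (u = [:: lx; ly; lx] /\ v = [:: lx; lx; ly; lx])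
  \/ (u = [:: lx; ly; lx] /\ v = [:: lx; ly; lx; lx])
  \/ (u = [:: lx; ly; lx; ly] /\ v = [:: ly; lx; ly; lx]).

Definition D15_satisfies (u v : word) : Prop :=
  forall M : monoid, (forall u' v', D15_axiom u' v' -> msat M u' v') -> msat M u v.

(* Main.v *)
Require Import Defs.
From mathcomp Require Import all_boot all_fingroup.
From mathcomp Require Import zify.

Lemma meval_cat (M : monoid) (f : nat -> M) u v :
  meval M f (u ++ v) = mop M (meval M f u) (meval M f v).
Proof.
elim: u => [|a u IH] /=; first by rewrite mop1l.
by rewrite /meval /= -/(meval M f (u ++ v)) IH mopA.
Qed.

Lemma meval_cons (M : monoid) (f : nat -> M) a u :
  meval M f (a :: u) = mop M (f a) (meval M f u).
Proof. by []. Qed.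

Lemma meval_nil (M : monoid) (f : nat -> M) : meval M f [::] = mone M.
Proof. by []. Qed.

Lemma ax_l (M : monoid) (Hax : forall u v, D15_axiom u v -> msat M u v) (A B : M) :
  mop M A (mop M B A) = mop M A (mop M A (mop M B A)).
Proof.
have H := Hax [:: lx; ly; lx] [:: lx; lx; ly; lx] (or_intror (or_introl (conj erefl erefl)))
  (fun n => if n == lx then A else B).
by move: H; rewrite /meval /= !mop1r.
Qed.

Lemma ax_r (M : monoid) (Hax : forall u v, D15_axiom u v -> msat M u v) (A B : M) :
  mop M A (mop M B A) = mop M A (mop M B (mop M A A)).
Proof.
have H := Hax [:: lx; ly; lx] [:: lx; ly; lx; lx]
  (or_intror (or_intror (or_introl (conj erefl erefl))))
  (fun n => if n == lx then A else B).
by move: H; rewrite /meval /= !mop1r.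
Qed.

Lemma square1 (M : monoid) (Hax : forall u v, D15_axiom u v -> msat M u v)
  (f : nat -> M) u a v :
  2 <= count_mem a (u ++ a :: v) ->
  meval M f (u ++ a :: v) = meval M f (u ++ a :: a :: v).
Proof.
rewrite count_cat /= eqxx /= => H.
have [Hu|Hv] : (a \in u) \/ (a \in v).
  case Hu: (a \in u); first by left.
  right; apply/negPn/count_memPn => E.
  move/negbT/count_memPn: Hu => E'; move: H; rewrite E E'; by [].
- case/splitPr: Hu => u1 u2.
  rewrite -!catA !cat_cons !meval_cat !meval_cons !meval_cat !meval_cons.
  have E := congr1 (fun t => mop M (meval M f u1) (mop M t (meval M f v)))
    (ax_r _ Hax (f a) (meval M f u2)).
  move: E; rewrite /= -!mopA; by [].
- case/splitPr: Hv => v1 v2.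
  rewrite !meval_cat !meval_cons !meval_cat !meval_cons.
  have E := congr1 (fun t => mop M (meval M f u) (mop M t (meval M f v2)))
    (ax_l _ Hax (f a) (meval M f v1)).
  move: E; rewrite /= -!mopA; by [].
Qed.

Definition sqw (r : word) : word := flatten [seq [:: a; a] | a <- r].

Lemma square_all (M : monoid) (Hax : forall u v, D15_axiom u v -> msat M u v)
  (f : nat -> M) r u v :
  (forall a, a \in r -> 2 <= count_mem a (u ++ r ++ v)) ->
  meval M f (u ++ r ++ v) = meval M f (u ++ sqw r ++ v).
Proof.
elim: r u => [|a r IH] u H //=.
rewrite (square1 _ Hax); last by apply: H; rewrite mem_head.
have -> : u ++ a :: a :: r ++ v = (u ++ [:: a; a]) ++ r ++ v by rewrite -catA.
rewrite IH; first by rewrite -catA.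
move=> b Hb; have := H b; rewrite in_cons Hb orbT => /(_ isT).
rewrite !count_cat /=; lia.
Qed.

Definition phi' (M : monoid) (P Q S X Y : M) (As : seq M) (n : nat) : M :=
  if n == 0 then X else if n == 1 then Y else if n == 2 then Q
  else if n == 4 then P else if n == 7 then S
  else if n %% 3 == 2 then nth (mone M) As (n %/ 3).-1 else mone M.

Lemma phiz M P Q S X Y As j : 0 < j -> phi' M P Q S X Y As (lz j) = mone M.
Proof.
move=> Hj; rewrite /phi' /lz.
have -> : (3 * j == 0) = false by apply/eqP; lia.
have -> : (3 * j == 1) = false by apply/eqP; lia.
have -> : (3 * j == 2) = false by apply/eqP; lia.
have -> : (3 * j == 4) = false by apply/eqP; lia.
have -> : (3 * j == 7) = false by apply/eqP; lia.
by rewrite modnMr.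
Qed.

Lemma phit M P Q S X Y As i : 3 <= i -> phi' M P Q S X Y As (lti i) = mone M.
Proof.
move=> Hj; rewrite /phi' /lti.
have -> : (3 * i + 1 == 0) = false by apply/eqP; lia.
have -> : (3 * i + 1 == 1) = false by apply/eqP; lia.
have -> : (3 * i + 1 == 2) = false by apply/eqP; lia.
have -> : (3 * i + 1 == 4) = false by apply/eqP; lia.
have -> : (3 * i + 1 == 7) = false by apply/eqP; lia.
have -> : (3 * i + 1) %% 3 = 1 by rewrite mulnC modnMDl.
by [].
Qed.

Lemma phiy M P Q S X Y As i : 0 < i -> phi' M P Q S X Y As (lyi i) = nth (mone M) As i.-1.
Proof.
move=> Hj; rewrite /phi' /lyi.
have -> : (3 * i + 2 == 0) = false by apply/eqP; lia.
have -> : (3 * i + 2 == 1) = false by apply/eqP; lia.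
have -> : (3 * i + 2 == 2) = false by apply/eqP; lia.
have -> : (3 * i + 2 == 4) = false by apply/eqP; lia.
have -> : (3 * i + 2 == 7) = false by apply/eqP; lia.
have -> : (3 * i + 2) %% 3 = 2 by rewrite mulnC modnMDl.
rewrite eqxx.
by rewrite (mulnC 3 i) divnMDl // divn_small // addn0.
Qed.

Lemma pimg_pos N (tau : {perm 'I_N}) i : 0 < i <= N -> 0 < pimg tau i.
Proof.
move=> /andP [H1 H2]; rewrite /pimg; case: insubP => [//|].
by rewrite /=; lia.
Qed.

Lemma rpart M P Q S X Y As N (tau : {perm 'I_N}) L :
  (forall i, i \in L -> 0 < i <= N) ->
  meval M (phi' M P Q S X Y As) (flatten [seq [:: lz (pimg tau i); lyi i; lyi i] | i <- L])
  = foldr (fun i acc => mop M (nth (mone M) As i.-1) (mop M (nth (mone M) As i.-1) acc)) (mone M) L.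
Proof.
elim: L => [|i L IH] H //=.
have Hi : 0 < i <= N by apply: H; rewrite mem_head.
rewrite ?meval_cat ?meval_cons ?meval_nil phiz; last exact: pimg_pos.
have Hi0 : 0 < i by case/andP: Hi.
rewrite phiy // mop1l IH //.
by move=> j Hj; apply: H; rewrite in_cons Hj orbT.
Qed.

Lemma tpart M P Q S X Y As L :
  (forall i, i \in L -> 3 <= i) ->
  meval M (phi' M P Q S X Y As) (flatten [seq [:: lti i; lz i] | i <- L]) = mone M.
Proof.
elim: L => [|i L IH] H //=.
have Hi : 3 <= i by apply: H; rewrite mem_head.
rewrite ?meval_cat ?meval_cons ?meval_nil phit // phiz; last by lia.
rewrite IH; first by rewrite !mop1l.
by move=> j Hj; apply: H; rewrite in_cons Hj orbT.
Qed.

Lemma sqpart (M : monoid) (f : nat -> M) r (B : seq M) :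
  foldr (fun i acc => mop M (nth (mone M) (B ++ map f r) i.-1)
                            (mop M (nth (mone M) (B ++ map f r) i.-1) acc)) (mone M)
        (iota (size B).+1 (size r).+1) = meval M f (sqw r).
Proof.
elim: r B => [|a r IH] B /=.
  by rewrite cats0 nth_default // !mop1l.
rewrite nth_cat ltnn subnn /=.
have := IH (rcons B (f a)); rewrite cat_rcons size_rcons => <-.
by [].
Qed.

Lemma cval (M : monoid) (f : nat -> M) (P Q S X Y : M) r (fst : word) :
  meval M (phi' M P Q S X Y (map f r)) (cword fst 1 0 (size r).+1 1%g) =
  mop M P (mop M (meval M (phi' M P Q S X Y (map f r)) fst) (mop M Q (mop M X
     (mop M (meval M f (sqw r)) (mop M (mone M) (mop M Y S)))))).
Proof.
rewrite /cword.
set phi := phi' M P Q S X Y (map f r).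
set A := flatten [seq [:: lz i; lti i] | i <- iota 1 1].
set B := flatten [seq [:: lz i; lti i] | i <- iota 2 0].
set C := flatten [seq [:: lz (pimg _ i); lyi i; lyi i] | i <- _].
set D := [:: lz (pimg _ _); ly].
set E := flatten [seq [:: lti i; lz i] | i <- _].
have E1 : meval M phi A = P.
  change (mop M (phi (lz 1)) (mop M (phi (lti 1)) (mone M)) = P).
  rewrite /phi phiz // mop1l mop1r; reflexivity.
have E2 : meval M phi E = S.
  change (meval M phi ([:: lti 2; lz 2] ++ flatten [seq [:: lti i; lz i] | i <- iota 3 (size r)]) = S).
  rewrite meval_cat /phi tpart; last by move=> i; rewrite mem_iota; lia.
  rewrite !meval_cons meval_nil phiz // !mop1r; reflexivity.
have E3 : meval M phi D = mop M (mone M) (mop M Y (mone M)).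
  rewrite /D !meval_cons /phi phiz //; last by apply: pimg_pos; lia.
have E4 : meval M phi C = meval M f (sqw r).
  rewrite /C /phi rpart; last by move=> i; rewrite mem_iota; lia.
  by rewrite -(sqpart _ f r [::]).
have E5 : meval M phi B = mone M by [].
clearbody A B C D E.
rewrite !meval_cat E1 E2 E3 E4 E5.
rewrite !meval_cons !meval_nil -!mopA ?mop1r ?mop1l. reflexivity.
Qed.

Theorem lemma6p2 (p q r s : word) (x y : nat) :
  x != y ->
  (forall a, a \in r -> 2 <= count_mem a (p ++ x :: y :: q ++ x :: r ++ y :: s)) ->
  D15_satisfies (p ++ x :: y :: q ++ x :: r ++ y :: s)
                (p ++ y :: x :: q ++ x :: r ++ y :: s).
Proof.
move=> _ Hc M Hax phi.
have Ew : p ++ x :: y :: q ++ x :: r ++ y :: s = (p ++ x :: y :: q ++ [:: x]) ++ r ++ y :: s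
  by rewrite -catA /= -catA.
have Ew' : p ++ y :: x :: q ++ x :: r ++ y :: s = (p ++ y :: x :: q ++ [:: x]) ++ r ++ y :: s
  by rewrite -catA /= -catA.
rewrite Ew Ew' (square_all _ Hax).
 all: cycle 1. by rewrite -Ew.
rewrite (square_all _ Hax phi r); last first.
  move=> a Ha; have := Hc a Ha; rewrite -!catA /=; do 3 rewrite ?count_cat /=; lia.
rewrite !meval_cat !meval_cons !meval_cat !meval_cons !meval_nil.
have Hd : D15_axiom (c_w 1 0 (size r).+1 1%g) (c'_w 1 0 (size r).+1 1%g).
  by left; exists 1, 0, (size r).+1, 1%g; split => //; left.
have H := Hax _ _ Hd (phi' M (meval M phi p) (meval M phi q) (meval M phi s)
   (phi x) (phi y) (map phi r)).
move: H; rewrite /c_w /c'_w !cval !meval_cons !meval_nil.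
rewrite -!mopA ?mop1r ?mop1l; by [].
Qed.
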